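(* Let $G(n,n_1,n_2,n_3,p_1,p_2,p_3)$ be a three-layer stochastic block model network satisfying the standing assumptions below. Fix any one of the three layers as target layer, and apply ReduceEdge to all communities of the other two layers. Then the (expected) modularity of the target layer's partition in the resulting graph is strictly larger than in the original graph.
   Context: Multi-layer stochastic block model $G(n,n_1,\dots,n_L,p_1,\dots,p_L)$: a random graph on $n$ nodes with $L$ layers. For each layer $l$ the nodes are partitioned into $n_l$ planted communities of size $s_l=n/n_l$; independently for each layer, each pair of distinct nodes in a common community of layer $l$ receives an edge from layer $l$ with probability $p_l$; the graph is the simple union of all generated edges, so a pair lying in a common community of exactly the layers in a set $T$ is an edge with probability $1-\prod_{l\in T}(1-p_l)$. The partitions of different layers are independent: for any $k\ge2$ distinct layers and one community from each, their intersection has $n/(n_{l_1}\cdots n_{l_k})$ nodes (in expectation). Standing assumptions: $n_l\ge4$, $p_l\in[0.05,1]$ for every layer, and $n\ge2\prod_l n_l$. ReduceEdge on a layer $l$: for a community $i$ of layer $l$ with size $s_l$, $e^i_{ll}$ internal edges and $e^i_{lout}$ outgoing edges (edges with exactly one endpoint in $i$), set $\widehat{p^i_l}=e^i_{ll}/(\tfrac12 s_l(s_l-1))$, $\widehat{q^i_l}=e^i_{lout}/(s_l(n-s_l))$ and $q^i_l=\widehat{q^i_l}/\widehat{p^i_l}$; each internal edge of community $i$ is kept independently with probability $q^i_l$ (removed with probability $1-q^i_l$). In the model these quantities are computed from expected edge counts, giving a common retention probability $q_l$ for all communities of layer $l$; when two layers are reduced, an edge internal to communities of both is kept with probability equal to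 the product of the two retention probabilities. Modularity of a layer $l$: for a graph with $e$ edges, $Q_l=\sum_i\big(\frac{e^i_{ll}}{e}-(\frac{d^i_l}{2e})^2\big)$ with $d^i_l=2e^i_{ll}+e^i_{lout}$, all edge counts being replaced by their expected values. *)

(* Defs.v *)
From mathcomp Require Import all_boot all_order all_algebra.
Set Implicit Arguments. Unset Strict Implicit. Unset Printing Implicit Defensive.
Import Order.TTheory GRing.Theory Num.Theory.
Local Open Scope ring_scope.

Section SBM.
Variables (R : realFieldType) (L : nat) (n : nat) (nl : 'I_L -> nat).

Definition prodn (S : {set 'I_L}) : R := \prod_(l in S) (nl l)%:R.

Definition csize (l : 'I_L) : R := n%:R / (nl l)%:R.

(* expected number of node pairs of the whole graph lying in a common
   community of (at least) every layer of S: the S-intersections have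
   n / prod_S n_l nodes and there are prod_S n_l of them *)
Definition graph_atleast (S : {set 'I_L}) : R :=
  n%:R / 2 * (n%:R / prodn S - 1).

(* pairs inside a fixed community i of layer l sharing (at least) the
   layers of S (they automatically share l) *)
Definition inner_atleast (l : 'I_L) (S : {set 'I_L}) : R :=
  csize l / 2 * (n%:R / prodn (l |: S) - 1).

(* pairs with exactly one endpoint in a fixed community i of layer l
   sharing (at least) the layers of S; zero when l \in S *)
Definition out_atleast (l : 'I_L) (S : {set 'I_L}) : R :=
  csize l * (n%:R / prodn S - n%:R / prodn (l |: S)).

(* Moebius inversion: from "at least the layers of S" to "exactly T" *)
Definition exactly (f : {set 'I_L} -> R) (T : {set 'I_L}) : R :=
  \sum_(S : {set 'I_L} | T \subset S) (-1) ^+ #|S :\: T| * f S.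

(* A graph of the model is described by w T = probability that a pair lying
   in a common community of exactly the layers in T is an edge. *)
Definition exp_edges (w : {set 'I_L} -> R) : R :=
  \sum_(T : {set 'I_L}) exactly graph_atleast T * w T.
Definition exp_inner (w : {set 'I_L} -> R) (l : 'I_L) : R :=
  \sum_(T : {set 'I_L}) exactly (inner_atleast l) T * w T.
Definition exp_out (w : {set 'I_L} -> R) (l : 'I_L) : R :=
  \sum_(T : {set 'I_L}) exactly (out_atleast l) T * w T.

(* Q_l = sum over the n_l (identical in expectation) communities i of
   e^i_ll / e - (d^i_l / 2e)^2 *)
Definition modularity (w : {set 'I_L} -> R) (l : 'I_L) : R :=
  \sum_(i < nl l)
    (exp_inner w l / exp_edges w
     - ((2 * exp_inner w l + exp_out w l) / (2 * exp_edges w)) ^+ 2).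

Definition orig_prob (p : 'I_L -> R) (T : {set 'I_L}) : R :=
  1 - \prod_(l in T) (1 - p l).

Definition retention (w : {set 'I_L} -> R) (l : 'I_L) : R :=
  let s := csize l in
  let phat := exp_inner w l / (s * (s - 1) / 2) in
  let qhat := exp_out w l / (s * (n%:R - s)) in
  qhat / phat.

(* graph after applying ReduceEdge to all communities of the layers in Red
   (retention probabilities computed on the original graph w); an edge
   internal to communities of several reduced layers is kept with the
   product of their retention probabilities *)
Definition reduced (w : {set 'I_L} -> R) (Red : {set 'I_L}) (T : {set 'I_L}) : R :=
  w T * \prod_(l in T :&: Red) retention w l.

End SBM.

(* Main.v *)
Require Import Defs.
From mathcomp Require Import all_boot all_order all_algebra.
From mathcomp Require Import ring lra.
Set Implicit Arguments. Unset Strict Implicit. Unset Printing Implicit Defensive.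
Import Order.TTheory GRing.Theory Num.Theory.
Local Open Scope ring_scope.

Definition cc (R : realFieldType) (x tt tu tv : R) (a b c : bool) : R :=
  x ^+ 2 / 2 * (if a then tt else 1 - tt) * (if b then tu else 1 - tu)
  * (if c then tv else 1 - tv) - (if [&& a, b & c] then x / 2 else 0).

Definition Wp (R : realFieldType) (pt pu pv : R) (a b c : bool) : R :=
  1 - (if a then 1 - pt else 1) * (if b then 1 - pu else 1) * (if c then 1 - pv else 1).

Definition rho (R : realFieldType) (ru rv : R) (b c : bool) : R :=
  (if b then ru else 1) * (if c then rv else 1).

Lemma Zpos (R : realFieldType) (pu pv ru rv : R) :
  0 <= pu <= 1 -> 0 <= pv <= 1 -> 0 <= ru <= 1 -> 0 <= rv <= 1 ->
  0 <= (1 - (1 - pu) * (1 - pv)) * (1 - ru * rv) + (pv - pu) * (ru - rv).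
Proof.
move=> /andP[? ?] /andP[? ?] /andP[? ?] /andP[? ?].
have [h1|h1] := lerP pu pv; have [h2|h2] := lerP ru rv.
- have : 0 <= (1 - (1 - pu) * (1 - pv)) - (pv - pu) by nra.
  have : 0 <= (1 - ru * rv) - (rv - ru) by nra.
  nra.
- have : 0 <= (1 - (1 - pu) * (1 - pv)) by nra.
  have : 0 <= (1 - ru * rv) by nra.
  nra.
- have : 0 <= (1 - (1 - pu) * (1 - pv)) by nra.
  have : 0 <= (1 - ru * rv) by nra.
  nra.
- have : 0 <= (1 - (1 - pu) * (1 - pv)) - (pu - pv) by nra.
  have : 0 <= (1 - ru * rv) - (ru - rv) by nra.
  nra.
Qed.

Lemma core_ident (R : realFieldType) (x tt tu tv pt pu pv ru rv : R) :
  let A0 := \sum_(b : bool) \sum_(c : bool) cc x tt tu tv true b c * Wp pt pu pv true b c in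
  let B0 := \sum_(b : bool) \sum_(c : bool) cc x tt tu tv false b c * Wp pt pu pv false b c in
  let A1 := \sum_(b : bool) \sum_(c : bool) cc x tt tu tv true b c * (Wp pt pu pv true b c * rho ru rv b c) in
  let B1 := \sum_(b : bool) \sum_(c : bool) cc x tt tu tv false b c * (Wp pt pu pv false b c * rho ru rv b c) in
  let K := x ^+ 2 / 2 in
  let a := (1 - tu) * (1 - tv) in let b := tu * (1 - tv) in
  let c := (1 - tu) * tv in let d := tu * tv in
  let X := a * b * pu * (1 - ru) + a * c * pv * (1 - rv)
    + b * d * pv * (1 - pu) * ru * (1 - rv) + c * d * pu * (1 - pv) * rv * (1 - ru)
    + b * c * ((1 - (1 - pu) * (1 - pv)) * (1 - ru * rv) + (pv - pu) * (ru - rv)) in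
  let Y := b * pu * ru * (1 - rv) + c * pv * rv * (1 - ru) in
  A1 * B0 - A0 * B1 = K * (1 - tt) * (K * tt * pt * X + x / 2 * (1 - (1 - pt) * (1 - pu) * (1 - pv)) * Y).
Proof.
rewrite /= !big_bool /cc /Wp /rho /=.
ring.
Qed.


Section Core.
Variables (R : realFieldType) (x tt tu tv pt pu pv ru rv : R).
Hypotheses (hx : 0 < x) (tt0 : 0 < tt) (tt1 : tt < 1) (tu0 : 0 < tu) (tu1 : tu < 1)
  (tv0 : 0 < tv) (tv1 : tv < 1) (pt0 : 0 < pt) (pt1 : pt <= 1)
  (pu0 : 0 < pu) (pu1 : pu <= 1) (pv0 : 0 < pv) (pv1 : pv <= 1)
  (ru0 : 0 <= ru) (ru1 : ru < 1) (rv0 : 0 <= rv) (rv1 : rv < 1)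
  (hP : 1 <= x * tt * tu * tv).

Lemma cc_ge0 a b c : 0 <= cc x tt tu tv a b c.
Proof.
have hK : 0 < x ^+ 2 / 2 by apply: divr_gt0 => //; rewrite exprn_gt0.
case: a b c => [] [] []; rewrite /cc /=.
  have -> : x ^+ 2 / 2 * tt * tu * tv - x / 2 = x / 2 * (x * tt * tu * tv - 1) by ring.
  apply: mulr_ge0; first by apply: divr_ge0 => //; apply: ltW.
  by rewrite subr_ge0.
all: rewrite subr0; move: hK; generalize (x ^+ 2 / 2) => K hK.
all: by repeat apply: mulr_ge0; rewrite ?subr_ge0; apply: ltW.
Qed.

Lemma Wp_ge0 a b c : 0 <= Wp pt pu pv a b c.
Proof.
rewrite /Wp subr_ge0.
have h : forall (b : bool) (p : R), 0 < p <= 1 -> 0 <= (if b then 1 - p else 1) <= 1.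
  move=> [] p /andP[p0 p1] //=; apply/andP; split; lra.
have /andP[ha1 ha2] := h a pt (introT andP (conj pt0 pt1)).
have /andP[hb1 hb2] := h b pu (introT andP (conj pu0 pu1)).
have /andP[hc1 hc2] := h c pv (introT andP (conj pv0 pv1)).
apply: mulr_ile1 => //; first exact: mulr_ge0.
exact: mulr_ile1.
Qed.

Lemma rho_ge0 b c : 0 <= rho ru rv b c.
Proof. by case: b c => [] [] /=; rewrite /rho ?mul1r ?mulr1 //; apply: mulr_ge0. Qed.

Lemma t0_ge0 a b c : 0 <= cc x tt tu tv a b c * Wp pt pu pv a b c.
Proof. by apply: mulr_ge0; [apply: cc_ge0 | apply: Wp_ge0]. Qed.

Lemma t1_ge0 a b c : 0 <= cc x tt tu tv a b c * (Wp pt pu pv a b c * rho ru rv b c).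
Proof. by apply: mulr_ge0; [apply: cc_ge0 | apply: mulr_ge0; [apply: Wp_ge0|apply: rho_ge0]]. Qed.

Lemma cc100 : 0 < cc x tt tu tv true false false * Wp pt pu pv true false false.
Proof.
rewrite /cc /Wp /=.
rewrite [X in 0 < X](_ : _ = x ^+ 2 / 2 * (tt * (1 - tu) * (1 - tv) * pt)); last by ring.
have hK : 0 < x ^+ 2 / 2 by apply: divr_gt0 => //; rewrite exprn_gt0.
apply: mulr_gt0 => //.
by repeat apply: mulr_gt0 => //; rewrite subr_gt0.
Qed.

Let A0 := \sum_(b : bool) \sum_(c : bool) cc x tt tu tv true b c * Wp pt pu pv true b c.
Let B0 := \sum_(b : bool) \sum_(c : bool) cc x tt tu tv false b c * Wp pt pu pv false b c.
Let A1 := \sum_(b : bool) \sum_(c : bool) cc x tt tu tv true b c * (Wp pt pu pv true b c * rho ru rv b c).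
Let B1 := \sum_(b : bool) \sum_(c : bool) cc x tt tu tv false b c * (Wp pt pu pv false b c * rho ru rv b c).

Lemma A0_gt0 : 0 < A0.
Proof.
have := t0_ge0 true true true; have := t0_ge0 true true false;
have := t0_ge0 true false true; have := cc100; rewrite /A0 !big_bool /=; lra.
Qed.

Lemma A1_gt0 : 0 < A1.
Proof.
have := t1_ge0 true true true; have := t1_ge0 true true false;
have := t1_ge0 true false true; have := cc100; rewrite /A1 !big_bool /rho /= !mulr1; lra.
Qed.

Lemma B0_ge0 : 0 <= B0.
Proof.
have := t0_ge0 false true true; have := t0_ge0 false true false;
have := t0_ge0 false false true; have := t0_ge0 false false false; rewrite /B0 !big_bool /=; lra.
Qed.

Lemma B1_ge0 : 0 <= B1.
Proof.
have := t1_ge0 false true true; have := t1_ge0 false true false;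
have := t1_ge0 false false true; have := t1_ge0 false false false; rewrite /B1 !big_bool /=; lra.
Qed.

Lemma cross_lt : A0 * B1 < A1 * B0.
Proof.
rewrite -subr_gt0.
have := core_ident x tt tu tv pt pu pv ru rv; rewrite /= -/A0 -/B0 -/A1 -/B1 => ->.
have hK : 0 < x ^+ 2 / 2 by apply: divr_gt0 => //; rewrite exprn_gt0.
have hZ : 0 <= (1 - (1 - pu) * (1 - pv)) * (1 - ru * rv) + (pv - pu) * (ru - rv).
  apply: Zpos; apply/andP; split => //; apply: ltW => //.
set Z := (_ * _ + _) in hZ *.
apply: mulr_gt0; first by apply: mulr_gt0 => //; rewrite subr_gt0.
apply: ltr_wpDr.
  apply: mulr_ge0; first apply: mulr_ge0.
  - by apply: divr_ge0 => //; apply: ltW.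
  - exact: (Wp_ge0 true true true).
  - by apply: addr_ge0; repeat apply: mulr_ge0; rewrite ?subr_ge0 //; apply: ltW.
apply: mulr_gt0; first by apply: mulr_gt0 => //; apply: mulr_gt0.
apply: ltr_wpDr; first by repeat apply: mulr_ge0; rewrite ?subr_ge0 //; apply: ltW.
apply: ltr_wpDr; first by repeat apply: mulr_ge0; rewrite ?subr_ge0 //; apply: ltW.
apply: ltr_wpDr; first by repeat apply: mulr_ge0; rewrite ?subr_ge0 //; apply: ltW.
apply: ltr_wpDr; first by repeat apply: mulr_ge0; rewrite ?subr_ge0 //; apply: ltW.
by repeat apply: mulr_gt0; rewrite ?subr_gt0.
Qed.

Lemma core : [/\ 0 < A0 + B0, 0 < A1 + B1 & A0 / (A0 + B0) < A1 / (A1 + B1)].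
Proof.
have a0 := A0_gt0; have a1 := A1_gt0; have b0 := B0_ge0; have b1 := B1_ge0.
have c := cross_lt.
have s0 : 0 < A0 + B0 by lra.
have s1 : 0 < A1 + B1 by lra.
split => //.
rewrite ltr_pdivrMr // mulrAC ltr_pdivlMr //.
nra.
Qed.

End Core.

Lemma ret_ident (R : realFieldType) (x tt tu tv pt pu pv : R) :
  let A := \sum_(b : bool) \sum_(c : bool) cc x tt tu tv true b c * Wp pt pu pv true b c in
  let B := \sum_(b : bool) \sum_(c : bool) cc x tt tu tv false b c * Wp pt pu pv false b c in
  A * (x - x * tt) - B * (x * tt - 1) =
  x ^+ 2 / 2 * (1 - tt) * ((1 - tu * pu) * (1 - tv * pv) * (x * tt * pt - 1)
     + (1 - pt) * (1 - pu) * (1 - pv)).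
Proof. rewrite /= !big_bool /cc /Wp /=; ring. Qed.

Lemma ret_core (R : realFieldType) (x tt tu tv pt pu pv : R) :
  0 < x -> 0 < tt < 1 -> 0 < tu < 1 -> 0 < tv < 1 ->
  0 < pt <= 1 -> 0 < pu <= 1 -> 0 < pv <= 1 -> 1 <= x * tt * tu * tv ->
  1 < x * tt * pt ->
  let A := \sum_(b : bool) \sum_(c : bool) cc x tt tu tv true b c * Wp pt pu pv true b c in
  let B := \sum_(b : bool) \sum_(c : bool) cc x tt tu tv false b c * Wp pt pu pv false b c in
  [/\ 0 < A, 0 < x * tt - 1, 0 < x - x * tt &
      0 <= B * (x * tt - 1) / (A * (x - x * tt)) < 1].
Proof.
move=> hx /andP[tt0 tt1] /andP[tu0 tu1] /andP[tv0 tv1] /andP[pt0 pt1]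
  /andP[pu0 pu1] /andP[pv0 pv1] hP hs A B.
have hA : 0 < A by apply: A0_gt0.
have hB : 0 <= B by apply: B0_ge0.
have s1 : 0 < x * tt - 1.
  have : x * tt * pt <= x * tt by rewrite ler_piMr //; apply: mulr_ge0; apply: ltW.
  lra.
have s2 : 0 < x - x * tt.
  by rewrite -{1}[x]mulr1 -mulrBr; apply: mulr_gt0 => //; rewrite subr_gt0.
have hD : 0 < A * (x - x * tt) by apply: mulr_gt0.
split => //; apply/andP; split.
  by apply: divr_ge0; [apply: mulr_ge0 => //; apply: ltW | apply: ltW].
rewrite ltr_pdivrMr // mul1r -subr_gt0.
have := ret_ident x tt tu tv pt pu pv; rewrite /= -/A -/B => ->.
have hK : 0 < x ^+ 2 / 2 by apply: divr_gt0 => //; rewrite exprn_gt0.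
apply: mulr_gt0; first by apply: mulr_gt0 => //; rewrite subr_gt0.
apply: ltr_wpDr; first by repeat apply: mulr_ge0; rewrite subr_ge0.
apply: mulr_gt0; last by rewrite subr_gt0.
have h1 : tu * pu < 1.
  have : tu * pu <= tu by rewrite ler_piMr //; apply: ltW.
  lra.
have h2 : tv * pv < 1.
  have : tv * pv <= tv by rewrite ler_piMr //; apply: ltW.
  lra.
by apply: mulr_gt0; rewrite subr_gt0.
Qed.

Section Enc.
Variables (R : realFieldType) (t u v : 'I_3).
Hypotheses (tu : t != u) (tv : t != v) (uv : u != v).
Hypothesis cover : forall x : 'I_3, [|| x == t, x == u | x == v].

Definition enc (a b c : bool) : {set 'I_3} :=
  [set x | [|| a && (x == t), b && (x == u) | c && (x == v)]].

Let ut : (u == t) = false. Proof. by rewrite eq_sym (negbTE tu). Qed.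
Let vt : (v == t) = false. Proof. by rewrite eq_sym (negbTE tv). Qed.
Let vu : (v == u) = false. Proof. by rewrite eq_sym (negbTE uv). Qed.

Lemma enc_t a b c : (t \in enc a b c) = a.
Proof. by rewrite inE eqxx (negbTE tu) (negbTE tv) !andbF !orbF andbT. Qed.
Lemma enc_u a b c : (u \in enc a b c) = b.
Proof. by rewrite inE eqxx ut (negbTE uv) !andbF andbT orbF. Qed.
Lemma enc_v a b c : (v \in enc a b c) = c.
Proof. by rewrite inE eqxx vt vu !andbF andbT. Qed.

Lemma set_enc (T : {set 'I_3}) : T = enc (t \in T) (u \in T) (v \in T).
Proof.
apply/setP => x; case/or3P: (cover x) => /eqP ->;
by rewrite ?enc_t ?enc_u ?enc_v.
Qed.

Lemma enc_eq (T : {set 'I_3}) a b c :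
  t \in T = a -> u \in T = b -> v \in T = c -> T = enc a b c.
Proof. by move=> <- <- <-; apply: set_enc. Qed.

Lemma sum_enc (F : {set 'I_3} -> R) :
  \sum_(T : {set 'I_3}) F T =
  \sum_(a : bool) \sum_(b : bool) \sum_(c : bool) F (enc a b c).
Proof.
rewrite (reindex (fun x : bool * bool * bool => enc x.1.1 x.1.2 x.2)) /=.
  rewrite pair_bigA /= pair_bigA /=.
  apply: eq_bigr => [[[a b] c]] _ //.
exists (fun T : {set 'I_3} => (t \in T, u \in T, v \in T)).
  by move=> [[a b] c] _ /=; rewrite enc_t enc_u enc_v.
by move=> T _ /=; rewrite -set_enc.
Qed.

Lemma prod_enc (f : 'I_3 -> R) a b c :
  \prod_(x in enc a b c) f x =
  (if a then f t else 1) * (if b then f u else 1) * (if c then f v else 1).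
Proof.
rewrite big_mkcond (bigD1 t) //= (bigD1 u) /=; last by rewrite ut.
rewrite (bigD1 v) /=; last by rewrite vu vt.
rewrite big_pred0; last first.
  move=> x /=; case/or3P: (cover x) => /eqP ->; by rewrite ?eqxx ?andbF.
by rewrite enc_t enc_u enc_v mulr1 mulrA.
Qed.

Lemma sub_enc a b c a' b' c' :
  (enc a b c \subset enc a' b' c') = [&& a ==> a', b ==> b' & c ==> c'].
Proof.
apply/idP/idP.
  move/subsetP=> H; have Ht := H t; have Hu := H u; have Hv := H v.
  rewrite !enc_t in Ht; rewrite !enc_u in Hu; rewrite !enc_v in Hv.
  by apply/and3P; split; apply/implyP.
case/and3P => /implyP Ha /implyP Hb /implyP Hc; apply/subsetP => x.
by case/or3P: (cover x) => /eqP ->; rewrite ?enc_t ?enc_u ?enc_v.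
Qed.

Lemma setD_enc a b c a' b' c' :
  enc a b c :\: enc a' b' c' = enc (a && ~~ a') (b && ~~ b') (c && ~~ c').
Proof.
by apply: enc_eq; rewrite inE ?enc_t ?enc_u ?enc_v andbC.
Qed.

Lemma sign_enc a b c a' b' c' :
  (-1) ^+ #|enc a b c :\: enc a' b' c'| =
  (if a && ~~ a' then -1 else 1) * (if b && ~~ b' then -1 else 1)
  * (if c && ~~ c' then -1 else 1) :> R.
Proof. by rewrite -prodr_const setD_enc prod_enc. Qed.

Lemma setUt_enc a b c : t |: enc a b c = enc true b c.
Proof. by apply: enc_eq; rewrite in_setU1 ?enc_t ?enc_u ?enc_v ?eqxx ?ut ?vt. Qed.

Lemma setCt_enc a b c : enc a b c :&: [set~ t] = enc false b c.
Proof. by apply: enc_eq; rewrite in_setI in_setC1 ?enc_t ?enc_u ?enc_v ?eqxx ?ut ?vt ?andbF ?andbT. Qed.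

Lemma exactly_enc (f : {set 'I_3} -> R) a b c :
  exactly f (enc a b c) =
  \sum_(a' : bool) \sum_(b' : bool) \sum_(c' : bool)
    (if [&& a ==> a', b ==> b' & c ==> c'] then
      (if a' && ~~ a then -1 else 1) * (if b' && ~~ b then -1 else 1)
      * (if c' && ~~ c then -1 else 1) * f (enc a' b' c') else 0).
Proof.
rewrite /exactly big_mkcond sum_enc.
do 3 (apply: eq_bigr => ? _); by rewrite sub_enc sign_enc.
Qed.


Variables (n : nat) (nl : 'I_3 -> nat).
Hypothesis nl_gt0 : forall l, (0 < nl l)%N.

Let Nne0 l : (nl l)%:R != 0 :> R.
Proof. by rewrite pnatr_eq0 -lt0n. Qed.

Lemma prodn_enc a b c : prodn R nl (enc a b c) =
  (if a then (nl t)%:R else 1) * (if b then (nl u)%:R else 1)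
  * (if c then (nl v)%:R else 1).
Proof. by rewrite /prodn prod_enc. Qed.

Notation cc' := (cc (n%:R : R) (nl t)%:R^-1 (nl u)%:R^-1 (nl v)%:R^-1).

Lemma exactly_ga a b c :
  exactly (graph_atleast R n nl) (enc a b c) = cc' a b c.
Proof.
rewrite exactly_enc !big_bool /= /graph_atleast !prodn_enc /cc.
case: a b c => [] [] [] /= *.
all: by field; rewrite !Nne0.
Qed.


Lemma exactly_ia a b c :
  exactly (inner_atleast R n nl t) (enc a b c) =
  if a then cc' a b c / (nl t)%:R else 0.
Proof.
rewrite exactly_enc !big_bool /= /inner_atleast !setUt_enc !prodn_enc /cc /csize.
by case: a b c => [] [] [] /=; field; rewrite !Nne0.
Qed.

Lemma exactly_oa a b c :
  exactly (out_atleast R n nl t) (enc a b c) =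
  if a then 0 else 2 * cc' a b c / (nl t)%:R.
Proof.
rewrite exactly_enc !big_bool /= /out_atleast !setUt_enc !prodn_enc /cc /csize.
by case: a b c => [] [] [] /=; field; rewrite !Nne0.
Qed.

Definition Asum (w : {set 'I_3} -> R) :=
  \sum_(b : bool) \sum_(c : bool) cc' true b c * w (enc true b c).
Definition Bsum (w : {set 'I_3} -> R) :=
  \sum_(b : bool) \sum_(c : bool) cc' false b c * w (enc false b c).

Lemma edges_eq w : exp_edges n nl w = Asum w + Bsum w.
Proof.
rewrite /exp_edges sum_enc big_bool /Asum /Bsum.
by congr (_ + _); do 2 (apply: eq_bigr => ? _); rewrite exactly_ga.
Qed.

Lemma inner_eq w : exp_inner n nl w t = Asum w / (nl t)%:R.
Proof.
rewrite /exp_inner sum_enc /Asum !big_bool /=.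
rewrite !exactly_ia /=; field; by rewrite Nne0.
Qed.

Lemma out_eq w : exp_out n nl w t = 2 * Bsum w / (nl t)%:R.
Proof.
rewrite /exp_out sum_enc big_bool /Bsum /= !big_bool /=.
rewrite !exactly_oa /=; field; by rewrite Nne0.
Qed.

Lemma modularity_eq w : Asum w + Bsum w != 0 ->
  modularity n nl w t = (nl t)%:R * (Asum w / (nl t)%:R / (Asum w + Bsum w))
    - (nl t)%:R^-1.
Proof.
move=> h; rewrite /modularity sumr_const card_ord edges_eq inner_eq out_eq.
rewrite -mulr_natl; field; by rewrite h Nne0.
Qed.


Lemma orig_enc (p : 'I_3 -> R) a b c :
  orig_prob p (enc a b c) = Wp (p t) (p u) (p v) a b c.
Proof. by rewrite /orig_prob prod_enc. Qed.

Lemma red_enc (p : 'I_3 -> R) a b c :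
  reduced n nl (orig_prob p) [set~ t] (enc a b c) =
  Wp (p t) (p u) (p v) a b c *
  rho (retention n nl (orig_prob p) u) (retention n nl (orig_prob p) v) b c.
Proof. by rewrite /reduced setCt_enc prod_enc orig_enc /rho mul1r. Qed.

Lemma Asum_orig (p : 'I_3 -> R) : Asum (orig_prob p) =
  \sum_(b : bool) \sum_(c : bool) cc' true b c * Wp (p t) (p u) (p v) true b c.
Proof. by do 2 (apply: eq_bigr => ? _); rewrite orig_enc. Qed.

Lemma Bsum_orig (p : 'I_3 -> R) : Bsum (orig_prob p) =
  \sum_(b : bool) \sum_(c : bool) cc' false b c * Wp (p t) (p u) (p v) false b c.
Proof. by do 2 (apply: eq_bigr => ? _); rewrite orig_enc. Qed.

Lemma Asum_red (p : 'I_3 -> R) : Asum (reduced n nl (orig_prob p) [set~ t]) =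
  \sum_(b : bool) \sum_(c : bool) cc' true b c * (Wp (p t) (p u) (p v) true b c *
  rho (retention n nl (orig_prob p) u) (retention n nl (orig_prob p) v) b c).
Proof. by do 2 (apply: eq_bigr => ? _); rewrite red_enc. Qed.

Lemma Bsum_red (p : 'I_3 -> R) : Bsum (reduced n nl (orig_prob p) [set~ t]) =
  \sum_(b : bool) \sum_(c : bool) cc' false b c * (Wp (p t) (p u) (p v) false b c *
  rho (retention n nl (orig_prob p) u) (retention n nl (orig_prob p) v) b c).
Proof. by do 2 (apply: eq_bigr => ? _); rewrite red_enc. Qed.

Lemma ret_bound (p : 'I_3 -> R) :
  0 < (n%:R : R) -> 0 < ((nl t)%:R^-1 : R) < 1 -> 0 < ((nl u)%:R^-1 : R) < 1 ->
  0 < ((nl v)%:R^-1 : R) < 1 ->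
  0 < p t <= 1 -> 0 < p u <= 1 -> 0 < p v <= 1 ->
  1 <= (n%:R * (nl t)%:R^-1 * (nl u)%:R^-1 * (nl v)%:R^-1 : R) ->
  1 < n%:R * (nl t)%:R^-1 * p t ->
  0 <= retention n nl (orig_prob p) t < 1.
Proof.
move=> h1 h2 h3 h4 h5 h6 h7 h8 h9.
have [hA s1 s2 hr] := ret_core h1 h2 h3 h4 h5 h6 h7 h8 h9.
rewrite /retention inner_eq out_eq /csize Asum_orig Bsum_orig.
move: hA s1 s2 hr.
set A := \sum_(b : bool) _; set B := \sum_(b : bool) _ => hA s1 s2.
suff -> : 2 * B / (nl t)%:R / (n%:R / (nl t)%:R * (n%:R - n%:R / (nl t)%:R)) /
  (A / (nl t)%:R / (n%:R / (nl t)%:R * (n%:R / (nl t)%:R - 1) / 2)) =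
  B * (n%:R * (nl t)%:R^-1 - 1) / (A * (n%:R - n%:R * (nl t)%:R^-1)) by [].
field.
have e1 : n%:R * (nl t)%:R - n%:R = (nl t)%:R * (n%:R - n%:R * (nl t)%:R^-1) :> R.
  by field; rewrite Nne0.
have e2 : n%:R + -1 * (nl t)%:R = (nl t)%:R * (n%:R * (nl t)%:R^-1 - 1) :> R.
  by field; rewrite Nne0.
rewrite e1 e2 !mulf_neq0 ?Nne0 //; try by rewrite gt_eqF.
by rewrite /= !gt_eqF.
Qed.

End Enc.

Lemma main_generic (R : realFieldType) (n : nat) (nl : 'I_3 -> nat)
    (p : 'I_3 -> R) (t u v : 'I_3) :
  t != u -> t != v -> u != v -> (forall x : 'I_3, [|| x == t, x == u | x == v]) ->
  (forall l, (4 <= nl l)%N) ->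
  (forall l, (20%:R)^-1 <= p l <= 1) ->
  (2 * (nl t * nl u * nl v) <= n)%N ->
  modularity n nl (orig_prob p) t <
  modularity n nl (reduced n nl (orig_prob p) [set~ t]) t.
Proof.
move=> tu tv uv cov h4 hp hN.
have ut : u != t by rewrite eq_sym.
have vt : v != t by rewrite eq_sym.
have vu : v != u by rewrite eq_sym.
have cov2 : forall x : 'I_3, [|| x == u, x == t | x == v].
  by move=> x; case/or3P: (cov x) => ->; rewrite ?orbT.
have cov3 : forall x : 'I_3, [|| x == v, x == t | x == u].
  by move=> x; case/or3P: (cov x) => ->; rewrite ?orbT.
have gt0 : forall l, (0 < nl l)%N by move=> l; apply: leq_trans (h4 l).
have N4 : forall l, 4 <= (nl l)%:R :> R by move=> l; rewrite (ler_nat R 4).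
have Npos : forall l, 0 < (nl l)%:R :> R by move=> l; rewrite ltr0n.
have th : forall l, 0 < ((nl l)%:R^-1 : R) < 1.
  move=> l; rewrite invr_gt0 Npos /= invf_lt1 //.
  by apply: lt_le_trans (N4 l); rewrite ltr1n.
have th4 : forall l, ((nl l)%:R^-1 : R) <= 4^-1.
  by move=> l; rewrite lef_pV2 ?posrE // ?N4 //; apply: ltr0n.
have pp : forall l, 0 < p l <= 1.
  move=> l; have /andP[h1 h2] := hp l; rewrite h2 andbT.
  by apply: lt_le_trans h1; rewrite invr_gt0 ltr0n.
have p20 : forall l, 1 <= 20 * p l.
  move=> l; have /andP[h1 _] := hp l.
  by rewrite -(ler_pdivrMl _ _ (ltr0n R 20)) mulr1.
have hx2 : 2 * ((nl t)%:R * (nl u)%:R * (nl v)%:R) <= n%:R :> R.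
  by rewrite -!natrM (ler_nat R (2 * _)).
have hx : 0 < n%:R :> R.
  apply: lt_le_trans hx2; apply: mulr_gt0 => //; apply: mulr_gt0 => //; exact: mulr_gt0.
have hP2 : forall a b c : 'I_3, (nl a * nl b * nl c = nl t * nl u * nl v)%N ->
    2 <= (n%:R * (nl a)%:R^-1 * (nl b)%:R^-1 * (nl c)%:R^-1 : R).
  move=> a b c e.
  have -> : (n%:R * (nl a)%:R^-1 * (nl b)%:R^-1 * (nl c)%:R^-1 : R) =
     n%:R / ((nl a * nl b * nl c)%N%:R) by rewrite !natrM !invfM !mulrA.
  rewrite ler_pdivlMr; last by rewrite ltr0n !muln_gt0 !gt0.
  by rewrite e !natrM.
have hP : forall a b c : 'I_3, (nl a * nl b * nl c = nl t * nl u * nl v)%N ->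
    1 <= (n%:R * (nl a)%:R^-1 * (nl b)%:R^-1 * (nl c)%:R^-1 : R).
  by move=> a b c e; apply: le_trans (hP2 a b c e); rewrite ler1n.
have hs : forall a b c : 'I_3, (nl a * nl b * nl c = nl t * nl u * nl v)%N ->
    1 < n%:R * (nl a)%:R^-1 * p a.
  move=> a b c e; have := hP2 a b c e.
  have hb := th b; have hc := th c; have := th4 b; have := th4 c; have := p20 a.
  move: hb hc => /andP[hb0 hb1] /andP[hc0 hc1].
  set y := n%:R * (nl a)%:R^-1.
  rewrite -/y => h20 hc4 hb4 hy.
  have hbc : (nl b)%:R^-1 * (nl c)%:R^-1 <= 16^-1 :> R.
    have -> : 16^-1 = 4^-1 * 4^-1 :> R by rewrite -invfM; congr (_^-1); rewrite -natrM.
    by apply: ler_pM => //; apply: ltW.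
  have hy32 : 32 <= y.
    have : 2 <= y * ((nl b)%:R^-1 * (nl c)%:R^-1) by rewrite mulrA.
    have hy0 : 0 <= y by apply: mulr_ge0; apply: ltW => //; have /andP[] := th a.
    move=> h; have : 2 <= y * 16^-1 by apply: le_trans h _; apply: ler_wpM2l.
    rewrite ler_pdivlMr //.
    by have -> : (2 * 16 : R) = 32 by rewrite -natrM.
  nra.
have [r0u r1u] := andP (ret_bound ut uv tv cov2 (nl:=nl) gt0 hx (th u) (th t) (th v)
  (pp u) (pp t) (pp v) (hP u t v ltac:(ring)) (hs u t v ltac:(ring))).
have [r0v r1v] := andP (ret_bound vt vu tu cov3 (nl:=nl) gt0 hx (th v) (th t) (th u)
  (pp v) (pp t) (pp u) (hP v t u ltac:(ring)) (hs v t u ltac:(ring))).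
have := th t; have := th u; have := th v; move=> /andP[tv0 tv1] /andP[tu0 tu1] /andP[tt0 tt1].
have := pp t; have := pp u; have := pp v; move=> /andP[pv0 pv1] /andP[pu0 pu1] /andP[pt0 pt1].
have [s0 s1 key] := core hx tt0 tt1 tu0 tu1 tv0 tv1 pt0 pt1 pu0 pu1 pv0 pv1
  r0u r1u r0v r1v (hP t u v erefl).
rewrite (modularity_eq tu tv uv cov gt0); last first.
  by rewrite (Asum_orig tu tv uv cov) (Bsum_orig tu tv uv cov) gt_eqF.
rewrite (modularity_eq tu tv uv cov gt0); last first.
  by rewrite (Asum_red tu tv uv cov) (Bsum_red tu tv uv cov) gt_eqF.
rewrite (Asum_orig tu tv uv cov) (Bsum_orig tu tv uv cov) (Asum_red tu tv uv cov) (Bsum_red tu tv uv cov).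
rewrite ltrD2r.
have hNt : (nl t)%:R != 0 :> R by rewrite gt_eqF.
have e : forall A S : R, (nl t)%:R * (A / (nl t)%:R / S) = A / S.
  by move=> A S; rewrite mulrA mulrCA divff // mulr1.
by rewrite !e.
Qed.

Lemma prod3 (f : 'I_3 -> nat) (t u v : 'I_3) :
  t != u -> t != v -> u != v -> (forall x : 'I_3, [|| x == t, x == u | x == v]) ->
  (\prod_(l < 3) f l = f t * f u * f v)%N.
Proof.
move=> tu tv uv cov.
rewrite (bigD1 t) //= (bigD1 u) /=; last by rewrite eq_sym.
rewrite (bigD1 v) /=; last by rewrite ![v == _]eq_sym tv uv.
rewrite big_pred0 ?muln1 ?mulnA //.
move=> x /=; case/or3P: (cov x) => /eqP ->; by rewrite ?eqxx ?andbF.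
Qed.

Unset Implicit Arguments.

Theorem theorem14 (R : realFieldType) (n : nat) (nl : 'I_3 -> nat)
    (p : 'I_3 -> R) (t : 'I_3) :
  (forall l, (4 <= nl l)%N) ->
  (forall l, (20%:R)^-1 <= p l <= 1) ->
  (2 * \prod_(l < 3) nl l <= n)%N ->
  modularity n nl (orig_prob p) t <
  modularity n nl (reduced n nl (orig_prob p) [set~ t]) t.
Proof.
move=> h4 hp hN.
have [u [v [tu tv uv cov]]] : exists u v : 'I_3,
    [/\ t != u, t != v, u != v & forall x : 'I_3, [|| x == t, x == u | x == v]].
  case: t => [[|[|[|k]]] Hk] //.
  - exists (Ordinal (isT : (1 < 3)%N)), (Ordinal (isT : (2 < 3)%N)).
    by split => //; case => [[|[|[|k']]] Hk'].
  - exists (Ordinal (isT : (0 < 3)%N)), (Ordinal (isT : (2 < 3)%N)).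
    by split => //; case => [[|[|[|k']]] Hk'].
  - exists (Ordinal (isT : (0 < 3)%N)), (Ordinal (isT : (1 < 3)%N)).
    by split => //; case => [[|[|[|k']]] Hk'].
have e := prod3 nl tu tv uv cov.
apply: main_generic tu tv uv cov h4 hp _.
by rewrite -e.
Qed.
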